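(* Let $b\ge 2$ be an integer, let $G$ be a $b$-dc-semigroup, and suppose $I_b(j,l)\subseteq G$ for some $j\in\mathbf{N}$ and $l\in\mathbf{N}^*$. Let $d=\lceil j/l\rceil$. \begin{enumerate} \item If $d\ge 1$, then $I_b(dj,+\infty)\subseteq G$. \item If $d=0$, $l\ge 2$ and $b=2$, then $G=\mathbf{N}^*$. \item If $d=0$ and $b>2$, then $G=\mathbf{N}^*$. \end{enumerate}
   Context: $\mathbf{N}=\{0,1,2,\dots\}$ and $\mathbf{N}^*=\mathbf{N}\setminus\{0\}$. For an integer $b\ge2$, a $b$-dc-semigroup is a subsemigroup $G$ of the multiplicative semigroup $(\mathbf{N}^*,\cdot)$ which is closed with respect to the number of base-$b$ digits: if $x\in G$ and $b^{n-1}\le x<b^n$ then $\{y\in\mathbf{N}: b^{n-1}\le y<b^n\}\subseteq G$. For $i\in\mathbf{N}$ and $j\in\mathbf{N}^*$, $I_b(i,j)=\{x\in\mathbf{N}: b^i\le x<b^{i+j}\}$ and $I_b(i,+\infty)=\{x\in\mathbf{N}: x\ge b^i\}$. *)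

(* Defs.v *)
From mathcomp Require Import all_boot.
Set Implicit Arguments. Unset Strict Implicit. Unset Printing Implicit Defensive.

(* G is a subsemigroup of (N^*, * ) closed w.r.t. the number of base-b digits:
   if x \in G has n base-b digits (b^(n-1) <= x < b^n) then every y with
   n base-b digits is in G. *)
Definition dc_semigroup (b : nat) (G : nat -> Prop) : Prop :=
  [/\ (forall x, G x -> 0 < x),
      (forall x y, G x -> G y -> G (x * y)) &
      (forall x y n, G x -> b ^ n.-1 <= x < b ^ n ->
                     b ^ n.-1 <= y < b ^ n -> G y)].

Definition Ib (b i j : nat) (x : nat) : Prop := b ^ i <= x < b ^ (i + j).

Definition Ib_inf (b i : nat) (x : nat) : Prop := b ^ i <= x.

Definition ceil_div (j l : nat) : nat := (j + l - 1) %/ l.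

(* Main.v *)
Require Import Defs.
From mathcomp Require Import all_boot.
From mathcomp Require Import zify.
Set Implicit Arguments.

Section H.
Variables (b : nat) (G : nat -> Prop).
Hypothesis hb : 2 <= b.
Hypothesis hG : dc_semigroup b G.

Definition P e := forall y, b ^ e <= y < b ^ e.+1 -> G y.

Lemma dcP x e : G x -> b ^ e <= x < b ^ e.+1 -> P e.
Proof.
case: hG => _ _ H3 Gx hx y hy; exact: (H3 x y e.+1 Gx hx hy).
Qed.

Lemma Pmem e : P e -> G (b ^ e).
Proof. move=> H; apply: H; rewrite leqnn /= ltn_exp2l //. Qed.

Lemma Padd e f : P e -> P f -> P (e + f).
Proof.
case: hG => _ HM _ Pe Pf.
apply: (@dcP _ (e + f) (HM _ _ (Pmem Pe) (Pmem Pf))).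
by rewrite -expnD leqnn /= ltn_exp2l.
Qed.

Lemma Padd1 e f : 1 <= e -> 1 <= f -> P e -> P f -> P (e + f).+1.
Proof.
case: hG => _ HM _ he hf Pe Pf.
have ue : b <= b ^ e by rewrite -{1}(expn1 b) leq_exp2l.
have uf : b <= b ^ f by rewrite -{1}(expn1 b) leq_exp2l.
set u := b ^ e in ue; set v := b ^ f in uf.
have Gx : G (b * u - 1).
  apply: Pe; rewrite expnS -/u; nia.
have Gy : G (b * v - 1).
  apply: Pf; rewrite expnS -/v; nia.
apply: (@dcP _ (e + f).+1 (HM _ _ Gx Gy)).
rewrite !expnS expnD -/u -/v.
have h1 : b * (u * v) <= (b * u - 1) * (b * v - 1).
  have -> : (b * u - 1) * (b * v - 1) = b * b * u * v - b * u - b * v + 1.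
    have : 1 <= b * u by nia.
    have : 1 <= b * v by nia.
    nia.
  nia.
apply/andP; split; first exact: h1.
have : 1 <= b * u by nia.
have : 1 <= b * v by nia.
nia.
Qed.

Lemma Pall x : 0 < x -> (forall e, P e) -> G x.
Proof.
move=> hx H; have := trunc_log_bounds hb hx => /= hh.
exact: (H _ x hh).
Qed.

End H.

Theorem lemma2p3 (b : nat) (G : nat -> Prop) (j l : nat) :
  2 <= b -> dc_semigroup b G -> 0 < l ->
  (forall x, Ib b j l x -> G x) ->
  [/\ (1 <= ceil_div j l ->
         forall x, Ib_inf b (ceil_div j l * j) x -> G x),
      (ceil_div j l = 0 -> 2 <= l -> b = 2 ->
         forall x, G x <-> 0 < x) &
      (ceil_div j l = 0 -> 2 < b ->
         forall x, G x <-> 0 < x)].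
Proof.
move=> hb hG hl hI.
have base : forall e, j <= e <= j + l - 1 -> P b G e.
  move=> e he y hy; apply: hI; rewrite /Ib.
  case/andP: hy => h1 h2; case/andP: he => e1 e2.
  rewrite (leq_trans _ h1) ?leq_exp2l //=.
  rewrite (leq_trans h2) // leq_exp2l //; lia.
have j0 : ceil_div j l = 0 -> j = 0.
  rewrite /ceil_div => hd.
  have := divn_eq (j + l - 1) l; rewrite hd mul0n add0n => E.
  have := ltn_pmod (j + l - 1) hl; lia.
have pos : forall x, G x -> 0 < x by case: hG.
have part23 : j = 0 -> 2 < b ^ l -> forall x, G x <-> 0 < x.
  move=> jz h2 x; subst j; split; first exact: pos.
  move=> hx; apply: (@Pall b G hb x hx) => e.
  have G2 : G 2 by apply: hI; rewrite /Ib expn0 add0n h2.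
  elim: e => [|e IH].
    apply: (base 0); lia.
  case: (hG) => _ HM _.
  have hbe : 1 <= b ^ e.+1 by rewrite expn_gt0; lia.
  apply: (@dcP b G hG _ e.+1 (HM _ _ G2 (IH (b ^ e.+1 - 1) _))).
  1,2: have w1 : b ^ e.+1 = b * b ^ e by rewrite expnS.
  1,2: have w2 : b ^ e.+2 = b * (b * b ^ e) by rewrite !expnS.
  1,2: rewrite ?w2 w1 in hbe *; nia.
split.
- move=> hd x hx.
  set d := ceil_div j l in hd hx.
  have j1 : 1 <= j.
    case: (posnP j) => [jz|]; last by [].
    move: hd; rewrite /d /ceil_div jz add0n divn_small; lia.
  have dl : j <= d * l.
    rewrite /d /ceil_div.
    have := divn_eq (j + l - 1) l; have := ltn_pmod (j + l - 1) hl; lia.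
  have ind : forall k, 1 <= k -> forall e, k * j <= e <= k * (j + l) - 1 -> P b G e.
    elim=> [//|k IH] _ e he.
    case: k IH he => [|k] IH he.
      apply: base; lia.
    have IH' := IH isT.
    case: (leqP (e - j) (k.+1 * (j + l) - 1)) => hc.
      have -> : e = (e - j) + j by lia.
      apply: Padd => //; [apply: IH'; lia | apply: base; lia].
    have -> : e = ((k.+1 * (j + l) - 1) + (e - (k.+1 * (j + l) - 1) - 1)).+1 by lia.
    apply: Padd1 => //; [lia | lia | apply: IH'; lia | apply: base; lia].
  have hx0 : 0 < x by apply: leq_trans hx; rewrite expn_gt0; lia.
  have := trunc_log_bounds hb hx0 => /= hh.
  set e := trunc_log b x in hh.
  have he : d * j <= e.
    case/andP: hh => h1 h2; rewrite -ltnS -(@ltn_exp2l b) //.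
    exact: leq_ltn_trans hx h2.
  set k := e %/ j.
  have ek := divn_eq e j; have ekr := ltn_pmod e j1.
  have kd : d <= k.
    rewrite /k leq_divRL //.
  apply: (ind k _ e) hh.
    lia.
  apply/andP; split; first by rewrite /k leq_divM.
  have : d * l <= k * l by rewrite leq_mul2r kd orbT.
  fold k in ek; nia.
- move=> hd hl2 hb2; apply: part23 (j0 hd) _.
  rewrite hb2; apply: (@leq_trans (2 ^ 2)) => //; rewrite leq_exp2l //.
- move=> hd hb3; apply: part23 (j0 hd) _.
  apply: leq_trans hb3 _; rewrite -{1}(expn1 b) leq_exp2l //; lia.
Qed.
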